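(* Let $c_1>0>c_2$, $L=c_1-c_2$, $t_0>0$, with $u,q_1,q_2$ as in the context. For $t\in[0,t_0]$ define $$y_l(t,\xi)=\xi+\ln L-\ln\!\Big(L+\big(c_1e^{-c_1(t-t_0)}-c_1e^{c_1t_0}-c_2e^{-c_2(t-t_0)}+c_2e^{c_2t_0}\big)e^{\xi}\Big),\quad \xi<q_1(0),$$ $$y_r(t,\xi)=\xi-\ln L+\ln\!\Big(L+\big(c_1e^{c_1(t-t_0)}-c_1e^{-c_1t_0}-c_2e^{c_2(t-t_0)}+c_2e^{-c_2t_0}\big)e^{-\xi}\Big),\quad \xi>q_2(0).$$ Then these are well defined, $y_l(0,\xi)=\xi$, $y_r(0,\xi)=\xi$, $y_l(t,\xi)<q_1(t)$, $y_r(t,\xi)>q_2(t)$, and for $0\le t<t_0$, $$\partial_t y_l(t,\xi)=u(t,y_l(t,\xi)),\qquad \partial_t y_r(t,\xi)=u(t,y_r(t,\xi)).$$ Moreover $u(t,y_l(t,\xi))$ equals $$\frac{\big(c_1^2e^{-c_1(t-t_0)}-c_2^2e^{-c_2(t-t_0)}\big)e^{\xi}}{L+\big(c_1e^{-c_1(t-t_0)}-c_1e^{c_1t_0}-c_2e^{-c_2(t-t_0)}+c_2e^{c_2t_0}\big)e^{\xi}} .$$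
   Context: For $t\neq t_0$ define $$p_1(t)=\frac{c_1-c_2e^{L(t-t_0)}}{1-e^{L(t-t_0)}},\qquad p_2(t)=\frac{c_2-c_1e^{L(t-t_0)}}{1-e^{L(t-t_0)}},$$ and for all $t$ define $$q_1(t)=\ln L+c_1(t-t_0)-\ln\big(c_1-c_2e^{L(t-t_0)}\big),\qquad q_2(t)=-\ln L+c_2(t-t_0)+\ln\big(c_1e^{L(t-t_0)}-c_2\big).$$ Set $u(t,x)=p_1(t)e^{-|x-q_1(t)|}+p_2(t)e^{-|x-q_2(t)|}$ for $x\in\mathbb R$, $t<t_0$. *)

(* Defs.v *)
From Stdlib Require Import Reals Lra.
Open Scope R_scope.

Definition LL (c1 c2 : R) : R := c1 - c2.

Definition p1 (c1 c2 t0 t : R) : R :=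
  (c1 - c2 * exp (LL c1 c2 * (t - t0))) / (1 - exp (LL c1 c2 * (t - t0))).
Definition p2 (c1 c2 t0 t : R) : R :=
  (c2 - c1 * exp (LL c1 c2 * (t - t0))) / (1 - exp (LL c1 c2 * (t - t0))).

Definition q1 (c1 c2 t0 t : R) : R :=
  ln (LL c1 c2) + c1 * (t - t0) - ln (c1 - c2 * exp (LL c1 c2 * (t - t0))).
Definition q2 (c1 c2 t0 t : R) : R :=
  - ln (LL c1 c2) + c2 * (t - t0) + ln (c1 * exp (LL c1 c2 * (t - t0)) - c2).

(* the peakon-antipeakon profile u(t,x), meaningful for t < t0 *)
Definition u (c1 c2 t0 t x : R) : R :=
  p1 c1 c2 t0 t * exp (- Rabs (x - q1 c1 c2 t0 t))
  + p2 c1 c2 t0 t * exp (- Rabs (x - q2 c1 c2 t0 t)).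

Definition Al (c1 c2 t0 t : R) : R :=
  c1 * exp (- c1 * (t - t0)) - c1 * exp (c1 * t0)
  - c2 * exp (- c2 * (t - t0)) + c2 * exp (c2 * t0).
Definition Ar (c1 c2 t0 t : R) : R :=
  c1 * exp (c1 * (t - t0)) - c1 * exp (- c1 * t0)
  - c2 * exp (c2 * (t - t0)) + c2 * exp (- c2 * t0).

Definition y_left (c1 c2 t0 t xi : R) : R :=
  xi + ln (LL c1 c2) - ln (LL c1 c2 + Al c1 c2 t0 t * exp xi).
Definition y_right (c1 c2 t0 t xi : R) : R :=
  xi - ln (LL c1 c2) + ln (LL c1 c2 + Ar c1 c2 t0 t * exp (- xi)).

(* Main.v *)
Require Import Defs.
From Stdlib Require Import Reals Lra.
From Coquelicot Require Import Coquelicot.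
Open Scope R_scope.


Lemma exp_neg c x : exp (- c * x) = / exp (c * x).
Proof. replace (- c * x) with (- (c * x)) by ring. apply exp_Ropp. Qed.

Lemma exp_LL c1 c2 x : exp (LL c1 c2 * x) = exp (c1 * x) / exp (c2 * x).
Proof. unfold LL, Rdiv. replace ((c1 - c2) * x) with (c1 * x + - (c2 * x)) by ring.
  rewrite exp_plus, exp_Ropp. reflexivity. Qed.

Lemma pos1 c1 c2 t0 t : 0 < c1 -> c2 < 0 -> 0 < c1 - c2 * exp (LL c1 c2 * (t - t0)).
Proof. intros. pose proof (exp_pos (LL c1 c2 * (t - t0))). nra. Qed.
Lemma pos2 c1 c2 t0 t : 0 < c1 -> c2 < 0 -> 0 < c1 * exp (LL c1 c2 * (t - t0)) - c2.
Proof. intros. pose proof (exp_pos (LL c1 c2 * (t - t0))). nra. Qed.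

Lemma eq1 c1 c2 t0 t : 0 < c1 -> c2 < 0 -> exp (q1 c1 c2 t0 t) =
  LL c1 c2 * exp (c1 * (t - t0)) / (c1 - c2 * exp (LL c1 c2 * (t - t0))).
Proof. intros. unfold q1.
  set (w := c1 - c2 * exp (LL c1 c2 * (t - t0))).
  replace (ln (LL c1 c2) + c1 * (t - t0) - ln w) with (ln (LL c1 c2) + c1 * (t - t0) + - ln w) by ring.
  rewrite !exp_plus, exp_Ropp, !exp_ln; [reflexivity| |].
  apply pos1; auto. unfold LL; lra. Qed.

Lemma eq2 c1 c2 t0 t : 0 < c1 -> c2 < 0 -> exp (q2 c1 c2 t0 t) =
  exp (c2 * (t - t0)) * (c1 * exp (LL c1 c2 * (t - t0)) - c2) / LL c1 c2.
Proof. intros. unfold q2.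
  rewrite !exp_plus, exp_Ropp, !exp_ln; [unfold Rdiv; ring| |].
  apply pos2; auto. unfold LL; lra. Qed.

Lemma eyl c1 c2 t0 t xi : 0 < c1 -> c2 < 0 -> 0 < LL c1 c2 + Al c1 c2 t0 t * exp xi ->
  exp (y_left c1 c2 t0 t xi) = exp xi * LL c1 c2 / (LL c1 c2 + Al c1 c2 t0 t * exp xi).
Proof. intros. unfold y_left.
  set (w := LL c1 c2 + Al c1 c2 t0 t * exp xi) in *.
  replace (xi + ln (LL c1 c2) - ln w) with (xi + ln (LL c1 c2) + - ln w) by ring.
  rewrite !exp_plus, exp_Ropp, !exp_ln; [reflexivity|auto|unfold LL; lra]. Qed.

Lemma eyr c1 c2 t0 t xi : 0 < c1 -> c2 < 0 -> 0 < LL c1 c2 + Ar c1 c2 t0 t * exp (- xi) ->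
  exp (y_right c1 c2 t0 t xi) = exp xi * (LL c1 c2 + Ar c1 c2 t0 t * exp (- xi)) / LL c1 c2.
Proof. intros. unfold y_right.
  set (w := LL c1 c2 + Ar c1 c2 t0 t * exp (- xi)) in *.
  replace (xi - ln (LL c1 c2) + ln w) with (xi + - ln (LL c1 c2) + ln w) by ring.
  rewrite !exp_plus, exp_Ropp, !exp_ln; [unfold Rdiv; ring|auto|unfold LL; lra]. Qed.

Lemma e0 c t0 : exp (c * t0) = / exp (c * (0 - t0)).
Proof. replace (c * (0 - t0)) with (- (c * t0)) by ring. rewrite exp_Ropp, Rinv_inv; auto. Qed.
Lemma e0' c t0 : exp (- c * t0) = exp (c * (0 - t0)).
Proof. f_equal; ring. Qed.

Lemma posL c1 c2 t0 t xi : 0 < c1 -> c2 < 0 -> xi < q1 c1 c2 t0 0 ->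
  0 < LL c1 c2 + Al c1 c2 t0 t * exp xi.
Proof. intros h1 h2 hx.
  apply exp_increasing in hx. rewrite eq1, exp_LL in hx by auto.
  unfold Al. rewrite !exp_neg, (e0 c1 t0), (e0 c2 t0).
  assert (hL : 0 < LL c1 c2) by (unfold LL; lra).
  set (L := LL c1 c2) in *.
  set (a := exp (c1 * (t - t0))). set (b := exp (c2 * (t - t0))).
  set (a0 := exp (c1 * (0 - t0))) in *. set (b0 := exp (c2 * (0 - t0))) in *.
  set (x := exp xi) in *.
  assert (0 < a) by apply exp_pos. assert (0 < b) by apply exp_pos.
  assert (0 < a0) by apply exp_pos. assert (0 < b0) by apply exp_pos.
  assert (0 < x) by apply exp_pos.
  assert (hK : 0 < c1 * b0 - c2 * a0).
  { assert (0 < c1 * b0) by (apply Rmult_lt_0_compat; auto).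
    assert (0 < - c2 * a0) by (apply Rmult_lt_0_compat; lra). lra. }
  replace (L * a0 / (c1 - c2 * (a0 / b0))) with (L * a0 * b0 / (c1 * b0 - c2 * a0)) in hx
    by (field; split; lra).
  assert (hx2 : x * (c1 * b0 - c2 * a0) < L * a0 * b0).
  { apply Rmult_lt_compat_r with (r := c1 * b0 - c2 * a0) in hx; auto.
    unfold Rdiv in hx. rewrite Rmult_assoc, Rinv_l, Rmult_1_r in hx; lra. }
  assert (h3 : 0 < c1 * / a) by (apply Rmult_lt_0_compat; auto; apply Rinv_0_lt_compat; auto).
  assert (h4 : 0 < - c2 * / b) by (apply Rmult_lt_0_compat; try lra; apply Rinv_0_lt_compat; auto).
  replace (c1 * / a - c1 * / a0 - c2 * / b + c2 * / b0) with
    ((c1 * / a + - c2 * / b) - (c1 * b0 - c2 * a0) / (a0 * b0)) by (field; lra).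
  assert (0 < L - (c1 * b0 - c2 * a0) / (a0 * b0) * x).
  { replace (L - (c1 * b0 - c2 * a0) / (a0 * b0) * x) with
      ((L * a0 * b0 - x * (c1 * b0 - c2 * a0)) / (a0 * b0)) by (field; lra).
    apply Rdiv_lt_0_compat; [lra|apply Rmult_lt_0_compat; auto]. }
  rewrite Rmult_minus_distr_r.
  assert (0 < (c1 * / a + - c2 * / b) * x) by (apply Rmult_lt_0_compat; lra).
  lra.
Qed.

Lemma posR c1 c2 t0 t xi : 0 < c1 -> c2 < 0 -> xi > q2 c1 c2 t0 0 ->
  0 < LL c1 c2 + Ar c1 c2 t0 t * exp (- xi).
Proof. intros h1 h2 hx.
  apply exp_increasing in hx. rewrite eq2, exp_LL in hx by auto.
  unfold Ar. rewrite !e0'.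
  assert (hL : 0 < LL c1 c2) by (unfold LL; lra).
  set (L := LL c1 c2) in *.
  set (a := exp (c1 * (t - t0))). set (b := exp (c2 * (t - t0))).
  set (a0 := exp (c1 * (0 - t0))) in *. set (b0 := exp (c2 * (0 - t0))) in *.
  rewrite exp_Ropp. set (x := exp xi) in *.
  assert (0 < a) by apply exp_pos. assert (0 < b) by apply exp_pos.
  assert (0 < a0) by apply exp_pos. assert (0 < b0) by apply exp_pos.
  assert (0 < x) by apply exp_pos.
  assert (hK : 0 < c1 * a0 - c2 * b0).
  { assert (0 < c1 * a0) by (apply Rmult_lt_0_compat; auto).
    assert (0 < - c2 * b0) by (apply Rmult_lt_0_compat; lra). lra. }
  replace (b0 * (c1 * (a0 / b0) - c2) / L) with ((c1 * a0 - c2 * b0) / L) in hx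
    by (field; split; lra).
  assert (hx2 : c1 * a0 - c2 * b0 < x * L).
  { apply Rmult_lt_compat_r with (r := L) in hx; auto.
    unfold Rdiv in hx. rewrite Rmult_assoc, Rinv_l, Rmult_1_r in hx; lra. }
  assert (0 < c1 * a - c2 * b).
  { assert (0 < c1 * a) by (apply Rmult_lt_0_compat; auto).
    assert (0 < - c2 * b) by (apply Rmult_lt_0_compat; lra). lra. }
  replace (L + (c1 * a - c1 * a0 - c2 * b + c2 * b0) * / x) with
    (((c1 * a - c2 * b) + (x * L - (c1 * a0 - c2 * b0))) / x) by (field; lra).
  apply Rdiv_lt_0_compat; lra.
Qed.

Lemma hxL c1 c2 t0 xi : 0 < c1 -> c2 < 0 -> xi < q1 c1 c2 t0 0 ->
  exp xi * (c1 * exp (c1 * t0) - c2 * exp (c2 * t0)) < LL c1 c2.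
Proof. intros h1 h2 hx.
  apply exp_increasing in hx. rewrite eq1, exp_LL in hx by auto.
  rewrite (e0 c1 t0), (e0 c2 t0).
  assert (hL : 0 < LL c1 c2) by (unfold LL; lra).
  set (L := LL c1 c2) in *.
  set (a0 := exp (c1 * (0 - t0))) in *. set (b0 := exp (c2 * (0 - t0))) in *.
  set (x := exp xi) in *.
  assert (0 < a0) by apply exp_pos. assert (0 < b0) by apply exp_pos.
  assert (0 < x) by apply exp_pos.
  assert (hK : 0 < c1 * b0 - c2 * a0).
  { assert (0 < c1 * b0) by (apply Rmult_lt_0_compat; auto).
    assert (0 < - c2 * a0) by (apply Rmult_lt_0_compat; lra). lra. }
  replace (L * a0 / (c1 - c2 * (a0 / b0))) with (L * a0 * b0 / (c1 * b0 - c2 * a0)) in hx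
    by (field; split; lra).
  assert (hx2 : x * (c1 * b0 - c2 * a0) < L * a0 * b0).
  { apply Rmult_lt_compat_r with (r := c1 * b0 - c2 * a0) in hx; auto.
    unfold Rdiv in hx. rewrite Rmult_assoc, Rinv_l, Rmult_1_r in hx; lra. }
  replace (x * (c1 * / a0 - c2 * / b0)) with (x * (c1 * b0 - c2 * a0) / (a0 * b0)) by (field; lra).
  apply Rmult_lt_reg_r with (a0 * b0). apply Rmult_lt_0_compat; auto.
  unfold Rdiv. rewrite Rmult_assoc, Rinv_l, Rmult_1_r. lra.
  apply Rgt_not_eq, Rmult_lt_0_compat; auto.
Qed.

Lemma hxR c1 c2 t0 xi : 0 < c1 -> c2 < 0 -> xi > q2 c1 c2 t0 0 ->
  c1 * exp (- c1 * t0) - c2 * exp (- c2 * t0) < exp xi * LL c1 c2.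
Proof. intros h1 h2 hx.
  apply exp_increasing in hx. rewrite eq2, exp_LL in hx by auto.
  rewrite !e0'.
  assert (hL : 0 < LL c1 c2) by (unfold LL; lra).
  set (L := LL c1 c2) in *.
  set (a0 := exp (c1 * (0 - t0))) in *. set (b0 := exp (c2 * (0 - t0))) in *.
  set (x := exp xi) in *.
  assert (0 < a0) by apply exp_pos. assert (0 < b0) by apply exp_pos.
  replace (b0 * (c1 * (a0 / b0) - c2) / L) with ((c1 * a0 - c2 * b0) / L) in hx
    by (field; split; lra).
  apply Rmult_lt_compat_r with (r := L) in hx; auto.
  unfold Rdiv in hx. rewrite Rmult_assoc, Rinv_l, Rmult_1_r in hx; lra.
Qed.

Lemma posnL c1 c2 t0 t xi : 0 < c1 -> c2 < 0 -> xi < q1 c1 c2 t0 0 ->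
  y_left c1 c2 t0 t xi < q1 c1 c2 t0 t.
Proof. intros h1 h2 hx.
  pose proof (posL c1 c2 t0 t xi h1 h2 hx) as hD.
  pose proof (hxL c1 c2 t0 xi h1 h2 hx) as hK.
  apply exp_lt_inv. rewrite eyl, eq1, exp_LL by auto.
  unfold Al in *. rewrite !exp_neg in *.
  assert (hL : 0 < LL c1 c2) by (unfold LL; lra).
  set (L := LL c1 c2) in *.
  set (a := exp (c1 * (t - t0))) in *. set (b := exp (c2 * (t - t0))) in *.
  set (A := exp (c1 * t0)) in *. set (B := exp (c2 * t0)) in *.
  set (x := exp xi) in *.
  set (D := L + (c1 * / a - c1 * A - c2 * / b + c2 * B) * x) in *.
  assert (0 < a) by apply exp_pos. assert (0 < b) by apply exp_pos.
  assert (0 < x) by apply exp_pos.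
  assert (hF : 0 < c1 - c2 * (a / b)).
  { assert (0 < - c2 * (a / b)) by (apply Rmult_lt_0_compat; [lra| apply Rdiv_lt_0_compat; auto]). lra. }
  apply Rminus_gt_0_lt.
  replace (L * a / (c1 - c2 * (a / b)) - x * L / D) with
    (L * a * (L - x * (c1 * A - c2 * B)) / ((c1 - c2 * (a / b)) * D)).
  2:{ assert (E1 : 0 < a * b * D) by (apply Rmult_lt_0_compat; auto; apply Rmult_lt_0_compat; auto).
       assert (E2 : 0 < b * (c1 - c2 * (a / b))) by (apply Rmult_lt_0_compat; auto).
       replace (a * b * D) with (L * (a * b) + ((c1 - c1 * A * a) * b - c2 * a + c2 * B * (a * b)) * x) in E1
         by (unfold D; field; lra).
       replace (b * (c1 - c2 * (a / b))) with (c1 * b - c2 * a) in E2 by (field; lra).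
       unfold D. field. split; lra. }
  apply Rdiv_lt_0_compat. apply Rmult_lt_0_compat. apply Rmult_lt_0_compat; auto. lra.
  apply Rmult_lt_0_compat; auto.
Qed.

Lemma posnR c1 c2 t0 t xi : 0 < c1 -> c2 < 0 -> xi > q2 c1 c2 t0 0 ->
  y_right c1 c2 t0 t xi > q2 c1 c2 t0 t.
Proof. intros h1 h2 hx.
  pose proof (posR c1 c2 t0 t xi h1 h2 hx) as hD.
  pose proof (hxR c1 c2 t0 xi h1 h2 hx) as hK.
  apply exp_lt_inv. rewrite eyr, eq2, exp_LL by auto.
  unfold Ar in *. rewrite exp_Ropp in *.
  assert (hL : 0 < LL c1 c2) by (unfold LL; lra).
  set (L := LL c1 c2) in *.
  set (a := exp (c1 * (t - t0))) in *. set (b := exp (c2 * (t - t0))) in *.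
  set (A := exp (- c1 * t0)) in *. set (B := exp (- c2 * t0)) in *.
  set (x := exp xi) in *.
  assert (0 < a) by apply exp_pos. assert (0 < b) by apply exp_pos.
  assert (0 < x) by apply exp_pos.
  apply Rminus_gt_0_lt.
  replace (x * (L + (c1 * a - c1 * A - c2 * b + c2 * B) * / x) / L - b * (c1 * (a / b) - c2) / L)
    with ((x * L - (c1 * A - c2 * B)) / L) by (field; lra).
  apply Rdiv_lt_0_compat; lra.
Qed.

Lemma exp_minus' x y : exp (x - y) = exp x / exp y.
Proof. unfold Rminus, Rdiv. rewrite exp_plus, exp_Ropp. reflexivity. Qed.

Lemma ab_lt c1 c2 t0 t : 0 < c1 -> c2 < 0 -> t < t0 -> exp (c1 * (t - t0)) < exp (c2 * (t - t0)).
Proof. intros. apply exp_increasing. nra. Qed.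

Lemma q12 c1 c2 t0 t : 0 < c1 -> c2 < 0 -> t < t0 -> q1 c1 c2 t0 t < q2 c1 c2 t0 t.
Proof. intros h1 h2 ht. pose proof (ab_lt c1 c2 t0 t h1 h2 ht) as hab.
  apply exp_lt_inv. rewrite eq1, eq2, exp_LL by auto.
  assert (hL : 0 < LL c1 c2) by (unfold LL; lra).
  replace (LL c1 c2) with (c1 - c2) in * by reflexivity.
  set (a := exp (c1 * (t - t0))) in *. set (b := exp (c2 * (t - t0))) in *.
  assert (0 < a) by apply exp_pos. assert (0 < b) by apply exp_pos.
  assert (hF : 0 < c1 * b - c2 * a) by nra.
  assert (hG : 0 < c1 * a - c2 * b) by nra.
  apply Rminus_gt_0_lt.
  replace (b * (c1 * (a / b) - c2) / (c1 - c2) - (c1 - c2) * a / (c1 - c2 * (a / b)))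
    with (c1 * (- c2) * ((a - b) * (a - b)) / ((c1 - c2) * (c1 * b - c2 * a))).
  2:{ field. repeat split; lra. }
  apply Rdiv_lt_0_compat. apply Rmult_lt_0_compat. apply Rmult_lt_0_compat; lra. nra.
  apply Rmult_lt_0_compat; lra.
Qed.

Lemma uL c1 c2 t0 t xi : 0 < c1 -> c2 < 0 -> t < t0 -> xi < q1 c1 c2 t0 0 ->
  u c1 c2 t0 t (y_left c1 c2 t0 t xi) =
     (c1 ^ 2 * exp (- c1 * (t - t0)) - c2 ^ 2 * exp (- c2 * (t - t0))) * exp xi
     / (LL c1 c2 + Al c1 c2 t0 t * exp xi).
Proof. intros h1 h2 ht hx.
  pose proof (posL c1 c2 t0 t xi h1 h2 hx) as hD.
  pose proof (posnL c1 c2 t0 t xi h1 h2 hx) as hy.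
  pose proof (q12 c1 c2 t0 t h1 h2 ht) as hq.
  pose proof (ab_lt c1 c2 t0 t h1 h2 ht) as hab.
  unfold u. rewrite (Rabs_left (_ - q1 _ _ _ _)) by lra.
  rewrite (Rabs_left (_ - q2 _ _ _ _)) by lra. rewrite !Ropp_involutive, !exp_minus'.
  rewrite eyl, eq1, eq2 by auto. unfold p1, p2. unfold Al in *.
  rewrite !exp_LL, !exp_neg in *.
  assert (hL : 0 < LL c1 c2) by (unfold LL; lra).
  set (L := LL c1 c2) in *.
  set (a := exp (c1 * (t - t0))) in *. set (b := exp (c2 * (t - t0))) in *.
  set (A := exp (c1 * t0)) in *. set (B := exp (c2 * t0)) in *.
  set (x := exp xi) in *.
  set (D := L + (c1 * / a - c1 * A - c2 * / b + c2 * B) * x) in *.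
  assert (0 < a) by apply exp_pos. assert (0 < b) by apply exp_pos.
  assert (0 < x) by apply exp_pos.
  assert (hF : 0 < c1 * b - c2 * a) by nra.
  assert (hG : 0 < c1 * a - c2 * b) by nra.
  unfold L, LL. unfold L, LL in hD, D.
  field. repeat split; lra.
Qed.

Lemma uR c1 c2 t0 t xi : 0 < c1 -> c2 < 0 -> t < t0 -> xi > q2 c1 c2 t0 0 ->
  u c1 c2 t0 t (y_right c1 c2 t0 t xi) =
     (c1 ^ 2 * exp (c1 * (t - t0)) - c2 ^ 2 * exp (c2 * (t - t0))) * exp (- xi)
     / (LL c1 c2 + Ar c1 c2 t0 t * exp (- xi)).
Proof. intros h1 h2 ht hx.
  pose proof (posR c1 c2 t0 t xi h1 h2 hx) as hD.
  pose proof (posnR c1 c2 t0 t xi h1 h2 hx) as hy.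
  pose proof (q12 c1 c2 t0 t h1 h2 ht) as hq.
  pose proof (ab_lt c1 c2 t0 t h1 h2 ht) as hab.
  unfold u. rewrite (Rabs_pos_eq (_ - q1 _ _ _ _)) by lra.
  rewrite (Rabs_pos_eq (_ - q2 _ _ _ _)) by lra. rewrite !Ropp_minus_distr, !exp_minus'.
  rewrite eyr, eq1, eq2 by auto. unfold p1, p2. unfold Ar in *.
  rewrite !exp_LL, exp_Ropp in *.
  assert (hL : 0 < LL c1 c2) by (unfold LL; lra).
  set (L := LL c1 c2) in *.
  set (a := exp (c1 * (t - t0))) in *. set (b := exp (c2 * (t - t0))) in *.
  set (A := exp (- c1 * t0)) in *. set (B := exp (- c2 * t0)) in *.
  set (x := exp xi) in *.
  set (D := L + (c1 * a - c1 * A - c2 * b + c2 * B) * / x) in *.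
  assert (0 < a) by apply exp_pos. assert (0 < b) by apply exp_pos.
  assert (0 < x) by apply exp_pos.
  assert (hF : 0 < c1 * b - c2 * a) by nra.
  assert (hG : 0 < c1 * a - c2 * b) by nra.
  unfold L, LL. unfold L, LL in hD, D.
  field. repeat split; lra.
Qed.

Lemma dL c1 c2 t0 t xi : 0 < c1 -> c2 < 0 -> t < t0 -> xi < q1 c1 c2 t0 0 ->
     derivable_pt_lim (fun s => y_left c1 c2 t0 s xi) t
       (u c1 c2 t0 t (y_left c1 c2 t0 t xi)).
Proof. intros h1 h2 ht hx.
  pose proof (posL c1 c2 t0 t xi h1 h2 hx) as hD.
  rewrite uL by auto. apply is_derive_Reals. unfold y_left, Al in *.
  auto_derive. exact hD.
  replace (t + - t0) with (t - t0) by ring. field. lra.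
Qed.

Lemma dR c1 c2 t0 t xi : 0 < c1 -> c2 < 0 -> t < t0 -> xi > q2 c1 c2 t0 0 ->
     derivable_pt_lim (fun s => y_right c1 c2 t0 s xi) t
       (u c1 c2 t0 t (y_right c1 c2 t0 t xi)).
Proof. intros h1 h2 ht hx.
  pose proof (posR c1 c2 t0 t xi h1 h2 hx) as hD.
  rewrite uR by auto. apply is_derive_Reals. unfold y_right, Ar in *.
  auto_derive. exact hD.
  replace (t + - t0) with (t - t0) by ring. field. lra.
Qed.
Theorem mainTheorem5 (c1 c2 t0 : R) (hc1 : 0 < c1) (hc2 : c2 < 0) (ht0 : 0 < t0) :
  (* well-definedness: the arguments of all logarithms are positive *)
  (0 < LL c1 c2 /\
   (forall t, 0 < c1 - c2 * exp (LL c1 c2 * (t - t0))) /\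
   (forall t, 0 < c1 * exp (LL c1 c2 * (t - t0)) - c2) /\
   (forall t xi, 0 <= t <= t0 -> xi < q1 c1 c2 t0 0 ->
      0 < LL c1 c2 + Al c1 c2 t0 t * exp xi) /\
   (forall t xi, 0 <= t <= t0 -> xi > q2 c1 c2 t0 0 ->
      0 < LL c1 c2 + Ar c1 c2 t0 t * exp (- xi))) /\
  (* initial values *)
  (forall xi, xi < q1 c1 c2 t0 0 -> y_left c1 c2 t0 0 xi = xi) /\
  (forall xi, xi > q2 c1 c2 t0 0 -> y_right c1 c2 t0 0 xi = xi) /\
  (* position relative to the peakons *)
  (forall t xi, 0 <= t <= t0 -> xi < q1 c1 c2 t0 0 ->
     y_left c1 c2 t0 t xi < q1 c1 c2 t0 t) /\
  (forall t xi, 0 <= t <= t0 -> xi > q2 c1 c2 t0 0 ->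
     y_right c1 c2 t0 t xi > q2 c1 c2 t0 t) /\
  (* characteristic ODEs *)
  (forall t xi, 0 <= t < t0 -> xi < q1 c1 c2 t0 0 ->
     derivable_pt_lim (fun s => y_left c1 c2 t0 s xi) t
       (u c1 c2 t0 t (y_left c1 c2 t0 t xi))) /\
  (forall t xi, 0 <= t < t0 -> xi > q2 c1 c2 t0 0 ->
     derivable_pt_lim (fun s => y_right c1 c2 t0 s xi) t
       (u c1 c2 t0 t (y_right c1 c2 t0 t xi))) /\
  (* explicit value of u along the left characteristic *)
  (forall t xi, 0 <= t < t0 -> xi < q1 c1 c2 t0 0 ->
     u c1 c2 t0 t (y_left c1 c2 t0 t xi) =
     (c1 ^ 2 * exp (- c1 * (t - t0)) - c2 ^ 2 * exp (- c2 * (t - t0))) * exp xi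
     / (LL c1 c2 + Al c1 c2 t0 t * exp xi)).
Proof.
  assert (hL : 0 < LL c1 c2) by (unfold LL; lra).
  split; [|split; [|split; [|split; [|split; [|split; [|split]]]]]].
  - split; [exact hL|]. split; [intro; apply pos1; auto|].
    split; [intro; apply pos2; auto|].
    split; intros t xi _ hx; [apply posL|apply posR]; auto.
  - intros xi _. unfold y_left.
    replace (Al c1 c2 t0 0) with 0.
    2:{ unfold Al. replace (- c1 * (0 - t0)) with (c1 * t0) by ring.
        replace (- c2 * (0 - t0)) with (c2 * t0) by ring. ring. }
    rewrite Rmult_0_l, Rplus_0_r. ring.
  - intros xi _. unfold y_right.
    replace (Ar c1 c2 t0 0) with 0.
    2:{ unfold Ar. replace (c1 * (0 - t0)) with (- c1 * t0) by ring.
        replace (c2 * (0 - t0)) with (- c2 * t0) by ring. ring. }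
    rewrite Rmult_0_l, Rplus_0_r. ring.
  - intros t xi _ hx. apply posnL; auto.
  - intros t xi _ hx. apply posnR; auto.
  - intros t xi ht hx. apply dL; auto; lra.
  - intros t xi ht hx. apply dR; auto; lra.
  - intros t xi ht hx. apply uL; auto; lra.
Qed.
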